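(* Let $r\ge2$, $e\ge1$ and $p'$ be integers with $0\le p'\le\frac{(r+1)e}{2}$. Then there exists an integer $p$ with $0\le p\le\frac{re}{2}$ such that the polynomial $$\Bigl\{\Omega^{2p'}\,(\underline{x}\,\underline{y})^{2p}\,a_{\underline{x}}^{re-2p}\,a_{\underline{y}}^{re-2p}\,b_{\underline{x}}^{e}\,b_{\underline{y}}^{e}\Bigr\}\Big|_{\underline{y}:=\underline{x}}$$ in the variables $a_0,a_1,b_0,b_1,x_0,x_1$ is not identically zero.
   Context: $\underline{x}=(x_0,x_1)$, $\underline{y}=(y_0,y_1)$, $a=(a_0,a_1)$, $b=(b_0,b_1)$ are pairs of indeterminates; $a_{\underline{x}}=a_0x_0+a_1x_1$, $a_{\underline{y}}=a_0y_0+a_1y_1$, similarly for $b$; $(\underline{x}\,\underline{y})=x_0y_1-x_1y_0$; $\Omega=\frac{\partial^2}{\partial x_0\partial y_1}-\frac{\partial^2}{\partial x_1\partial y_0}$; and $|_{\underline{y}:=\underline{x}}$ means substituting $y_i=x_i$ after differentiation. *)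

(* Defs.v *)
From HB Require Import structures.
From mathcomp Require Import all_boot all_order all_algebra.
From mathcomp Require Import mpoly.
Set Implicit Arguments. Unset Strict Implicit. Unset Printing Implicit Defensive.
Import GRing.Theory.
Local Open Scope ring_scope.

(* Polynomial ring Q[x0,x1,y0,y1,a0,a1,b0,b1] encoded as {mpoly rat[8]} with
   variable indices: x0=0, x1=1, y0=2, y1=3, a0=4, a1=5, b0=6, b1=7. *)
Definition P8 := {mpoly rat[8]}.

Definition ix0 : 'I_8 := inord 0.
Definition ix1 : 'I_8 := inord 1.
Definition iy0 : 'I_8 := inord 2.
Definition iy1 : 'I_8 := inord 3.
Definition ia0 : 'I_8 := inord 4.
Definition ia1 : 'I_8 := inord 5.
Definition ib0 : 'I_8 := inord 6.
Definition ib1 : 'I_8 := inord 7.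

Definition vX (i : 'I_8) : P8 := 'X_i.

Definition a_x : P8 := vX ia0 * vX ix0 + vX ia1 * vX ix1.
Definition a_y : P8 := vX ia0 * vX iy0 + vX ia1 * vX iy1.
Definition b_x : P8 := vX ib0 * vX ix0 + vX ib1 * vX ix1.
Definition b_y : P8 := vX ib0 * vX iy0 + vX ib1 * vX iy1.
Definition bracket_xy : P8 := vX ix0 * vX iy1 - vX ix1 * vX iy0.

Definition Omega (f : P8) : P8 :=
  mderiv ix0 (mderiv iy1 f) - mderiv ix1 (mderiv iy0 f).

Definition diag_img (i : 'I_8) : P8 :=
  if i == iy0 then vX ix0 else if i == iy1 then vX ix1 else vX i.

Definition diag (f : P8) : P8 := comp_mpoly [tuple diag_img i | i < 8] f.

(* Main.v *)
Require Import Defs.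
From HB Require Import structures.
From mathcomp Require Import all_boot all_order all_algebra.
From mathcomp Require Import mpoly.
From mathcomp Require Import ring zify.
Set Implicit Arguments. Unset Strict Implicit. Unset Printing Implicit Defensive.
Import GRing.Theory Num.Theory.
Local Open Scope ring_scope.

Lemma mderivXU (i j : 'I_8) : mderiv j (vX i) = (i == j)%:R.
Proof.
rewrite /vX mderivX mnm1E.
case: eqP => [->|ne]; last by rewrite scale0r.
have -> : (U_(j) - U_(j) = 0)%MM.
  apply/mnmP=> k; rewrite mnmBE mnm0E; exact: subnn.
by rewrite mpolyX0 scale1r.
Qed.

Lemma ieqE (i j : nat) : (i < 8)%N -> (j < 8)%N ->
  (inord i == inord j :> 'I_8) = (i == j).
Proof. by move=> hi hj; rewrite -val_eqE /= !inordK. Qed.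

Ltac dv := rewrite /= ?mderivXU /ix0 /ix1 /iy0 /iy1 /ia0 /ia1 /ib0 /ib1 ?ieqE //=.

Lemma mderiv1 (j : 'I_8) : mderiv j (1 : P8) = 0.
Proof. by rewrite -mpolyC1 mderivC. Qed.

Lemma mderivn (j : 'I_8) n : mderiv j (n%:R : P8) = 0.
Proof. by rewrite mderivMn mderiv1 mul0rn. Qed.

Lemma dpow (j : 'I_8) (p : P8) n :
  mderiv j (p ^+ n) = n%:R * p ^+ n.-1 * mderiv j p.
Proof.
elim: n => [|n IH]; first by rewrite expr0 mul0r mul0r mderiv1.
rewrite exprS mderivM IH /=; case: n {IH} => [|n]; rewrite /= ?expr0 ?exprS; ring.
Qed.

Ltac dsimp := rewrite ?mderivD ?mderivB ?mderivN ?mderivM ?mderivXU /ix0 /ix1 /iy0 /iy1 /ia0 /ia1 /ib0 /ib1 ?ieqE //=.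

Lemma d_a_x_ix0 : mderiv ix0 a_x = vX ia0.
Proof. rewrite /a_x; dsimp; ring. Qed.
Lemma d_a_x_ix1 : mderiv ix1 a_x = vX ia1.
Proof. rewrite /a_x; dsimp; ring. Qed.
Lemma d_a_x_iy0 : mderiv iy0 a_x = 0.
Proof. rewrite /a_x; dsimp; ring. Qed.
Lemma d_a_x_iy1 : mderiv iy1 a_x = 0.
Proof. rewrite /a_x; dsimp; ring. Qed.
Lemma d_a_y_ix0 : mderiv ix0 a_y = 0.
Proof. rewrite /a_y; dsimp; ring. Qed.
Lemma d_a_y_ix1 : mderiv ix1 a_y = 0.
Proof. rewrite /a_y; dsimp; ring. Qed.
Lemma d_a_y_iy0 : mderiv iy0 a_y = vX ia0.
Proof. rewrite /a_y; dsimp; ring. Qed.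
Lemma d_a_y_iy1 : mderiv iy1 a_y = vX ia1.
Proof. rewrite /a_y; dsimp; ring. Qed.
Lemma d_b_x_ix0 : mderiv ix0 b_x = vX ib0.
Proof. rewrite /b_x; dsimp; ring. Qed.
Lemma d_b_x_ix1 : mderiv ix1 b_x = vX ib1.
Proof. rewrite /b_x; dsimp; ring. Qed.
Lemma d_b_x_iy0 : mderiv iy0 b_x = 0.
Proof. rewrite /b_x; dsimp; ring. Qed.
Lemma d_b_x_iy1 : mderiv iy1 b_x = 0.
Proof. rewrite /b_x; dsimp; ring. Qed.
Lemma d_b_y_ix0 : mderiv ix0 b_y = 0.
Proof. rewrite /b_y; dsimp; ring. Qed.
Lemma d_b_y_ix1 : mderiv ix1 b_y = 0.
Proof. rewrite /b_y; dsimp; ring. Qed.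
Lemma d_b_y_iy0 : mderiv iy0 b_y = vX ib0.
Proof. rewrite /b_y; dsimp; ring. Qed.
Lemma d_b_y_iy1 : mderiv iy1 b_y = vX ib1.
Proof. rewrite /b_y; dsimp; ring. Qed.
Lemma d_bracket_xy_ix0 : mderiv ix0 bracket_xy = vX iy1.
Proof. rewrite /bracket_xy; dsimp; ring. Qed.
Lemma d_bracket_xy_ix1 : mderiv ix1 bracket_xy = - vX iy0.
Proof. rewrite /bracket_xy; dsimp; ring. Qed.
Lemma d_bracket_xy_iy0 : mderiv iy0 bracket_xy = - vX ix1.
Proof. rewrite /bracket_xy; dsimp; ring. Qed.
Lemma d_bracket_xy_iy1 : mderiv iy1 bracket_xy = vX ix0.
Proof. rewrite /bracket_xy; dsimp; ring. Qed.
Lemma d_ia0_ix0 : mderiv ix0 (vX ia0) = 0.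
Proof. dsimp. Qed.
Lemma d_ia0_ix1 : mderiv ix1 (vX ia0) = 0.
Proof. dsimp. Qed.
Lemma d_ia0_iy0 : mderiv iy0 (vX ia0) = 0.
Proof. dsimp. Qed.
Lemma d_ia0_iy1 : mderiv iy1 (vX ia0) = 0.
Proof. dsimp. Qed.
Lemma d_ia1_ix0 : mderiv ix0 (vX ia1) = 0.
Proof. dsimp. Qed.
Lemma d_ia1_ix1 : mderiv ix1 (vX ia1) = 0.
Proof. dsimp. Qed.
Lemma d_ia1_iy0 : mderiv iy0 (vX ia1) = 0.
Proof. dsimp. Qed.
Lemma d_ia1_iy1 : mderiv iy1 (vX ia1) = 0.
Proof. dsimp. Qed.
Lemma d_ib0_ix0 : mderiv ix0 (vX ib0) = 0.
Proof. dsimp. Qed.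
Lemma d_ib0_ix1 : mderiv ix1 (vX ib0) = 0.
Proof. dsimp. Qed.
Lemma d_ib0_iy0 : mderiv iy0 (vX ib0) = 0.
Proof. dsimp. Qed.
Lemma d_ib0_iy1 : mderiv iy1 (vX ib0) = 0.
Proof. dsimp. Qed.
Lemma d_ib1_ix0 : mderiv ix0 (vX ib1) = 0.
Proof. dsimp. Qed.
Lemma d_ib1_ix1 : mderiv ix1 (vX ib1) = 0.
Proof. dsimp. Qed.
Lemma d_ib1_iy0 : mderiv iy0 (vX ib1) = 0.
Proof. dsimp. Qed.
Lemma d_ib1_iy1 : mderiv iy1 (vX ib1) = 0.
Proof. dsimp. Qed.

Definition Ex (H : P8) := vX ix0 * mderiv ix0 H + vX ix1 * mderiv ix1 H.
Definition Ey (H : P8) := vX iy0 * mderiv iy0 H + vX iy1 * mderiv iy1 H.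
Definition hom2 (dx dy : P8) (H : P8) := Ex H = dx * H /\ Ey H = dy * H.
Definition cst (d : P8) := [/\ mderiv ix0 d = 0, mderiv ix1 d = 0, mderiv iy0 d = 0 & mderiv iy1 d = 0].

Lemma ExM f g : Ex (f * g) = Ex f * g + f * Ex g.
Proof. rewrite /Ex !mderivM; ring. Qed.
Lemma EyM f g : Ey (f * g) = Ey f * g + f * Ey g.
Proof. rewrite /Ey !mderivM; ring. Qed.
Lemma ExB f g : Ex (f - g) = Ex f - Ex g.
Proof. rewrite /Ex !mderivB; ring. Qed.
Lemma EyB f g : Ey (f - g) = Ey f - Ey g.
Proof. rewrite /Ey !mderivB; ring. Qed.

Lemma hom2M dx1 dy1 dx2 dy2 f g : hom2 dx1 dy1 f -> hom2 dx2 dy2 g ->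
  hom2 (dx1 + dx2) (dy1 + dy2) (f * g).
Proof. by move=> [h1 h2] [h3 h4]; split; rewrite ?ExM ?EyM ?h1 ?h2 ?h3 ?h4; ring. Qed.

Lemma hom2_1 : hom2 0 0 1.
Proof. by rewrite /hom2 /Ex /Ey !mderiv1; split; ring. Qed.

Lemma hom2X dx dy f n : hom2 dx dy f -> hom2 (n%:R * dx) (n%:R * dy) (f ^+ n).
Proof.
move=> h; elim: n => [|n IH]; first by rewrite !mul0r expr0; exact: hom2_1.
rewrite exprS; have := hom2M h IH; congr hom2; ring.
Qed.

Lemma cx0 F : mderiv ix0 (Ex F) = Ex (mderiv ix0 F) + mderiv ix0 F.
Proof. rewrite /Ex !mderivD !mderivM (mderiv_comm ix0 ix1); dsimp; ring. Qed.
Lemma cx1 F : mderiv ix1 (Ex F) = Ex (mderiv ix1 F) + mderiv ix1 F.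
Proof. rewrite /Ex !mderivD !mderivM (mderiv_comm ix0 ix1); dsimp; ring. Qed.
Lemma cy0 F : mderiv iy0 (Ex F) = Ex (mderiv iy0 F).
Proof. rewrite /Ex !mderivD !mderivM (mderiv_comm ix0 iy0) (mderiv_comm ix1 iy0); dsimp; ring. Qed.
Lemma cy1 F : mderiv iy1 (Ex F) = Ex (mderiv iy1 F).
Proof. rewrite /Ex !mderivD !mderivM (mderiv_comm ix0 iy1) (mderiv_comm ix1 iy1); dsimp; ring. Qed.
Lemma dy0 F : mderiv iy0 (Ey F) = Ey (mderiv iy0 F) + mderiv iy0 F.
Proof. rewrite /Ey !mderivD !mderivM (mderiv_comm iy0 iy1); dsimp; ring. Qed.
Lemma dy1 F : mderiv iy1 (Ey F) = Ey (mderiv iy1 F) + mderiv iy1 F.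
Proof. rewrite /Ey !mderivD !mderivM (mderiv_comm iy0 iy1); dsimp; ring. Qed.
Lemma dx0 F : mderiv ix0 (Ey F) = Ey (mderiv ix0 F).
Proof. rewrite /Ey !mderivD !mderivM (mderiv_comm iy0 ix0) (mderiv_comm iy1 ix0); dsimp; ring. Qed.
Lemma dx1 F : mderiv ix1 (Ey F) = Ey (mderiv ix1 F).
Proof. rewrite /Ey !mderivD !mderivM (mderiv_comm iy0 ix1) (mderiv_comm iy1 ix1); dsimp; ring. Qed.

Lemma dcM (d : P8) (j : 'I_8) F : mderiv j d = 0 -> mderiv j (d * F) = d * mderiv j F.
Proof. by move=> c; rewrite mderivM c mul0r add0r. Qed.

Lemma hom2_Omega dx dy H : cst dx -> cst dy -> hom2 dx dy H ->
  hom2 (dx - 1) (dy - 1) (Omega H).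
Proof.
move=> [cx0' cx1' cy0' cy1'] [dx0' dx1' dy0' dy1'] [hx hy]; rewrite /hom2 /Omega ExB EyB.
have e1 : Ex (mderiv ix0 (mderiv iy1 H)) = (dx - 1) * mderiv ix0 (mderiv iy1 H).
  have a2 := cy1 H; rewrite hx (dcM _ cy1') in a2.
  have a1 := cx0 (mderiv iy1 H); rewrite -a2 (dcM _ cx0') in a1.
  by rewrite (_ : Ex _ = dx * mderiv ix0 (mderiv iy1 H) - mderiv ix0 (mderiv iy1 H)); [ring | rewrite a1; ring].
have e2 : Ex (mderiv ix1 (mderiv iy0 H)) = (dx - 1) * mderiv ix1 (mderiv iy0 H).
  have a2 := cy0 H; rewrite hx (dcM _ cy0') in a2.
  have a1 := cx1 (mderiv iy0 H); rewrite -a2 (dcM _ cx1') in a1.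
  by rewrite (_ : Ex _ = dx * mderiv ix1 (mderiv iy0 H) - mderiv ix1 (mderiv iy0 H)); [ring | rewrite a1; ring].
have e3 : Ey (mderiv ix0 (mderiv iy1 H)) = (dy - 1) * mderiv ix0 (mderiv iy1 H).
  have a2 := dy1 H; rewrite hy (dcM _ dy1') in a2.
  by rewrite -dx0 (_ : Ey _ = dy * mderiv iy1 H - mderiv iy1 H); [rewrite mderivB (dcM _ dx0'); ring | rewrite a2; ring].
have e4 : Ey (mderiv ix1 (mderiv iy0 H)) = (dy - 1) * mderiv ix1 (mderiv iy0 H).
  have a2 := dy0 H; rewrite hy (dcM _ dy0') in a2.
  by rewrite -dx1 (_ : Ey _ = dy * mderiv iy0 H - mderiv iy0 H); [rewrite mderivB (dcM _ dx1'); ring | rewrite a2; ring].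
by rewrite e1 e2 e3 e4; split; ring.
Qed.

Lemma dv_ix0_ix0 : mderiv ix0 (vX ix0) = 1.
Proof. dsimp. Qed.
Lemma dv_ix0_ix1 : mderiv ix1 (vX ix0) = 0.
Proof. dsimp. Qed.
Lemma dv_ix0_iy0 : mderiv iy0 (vX ix0) = 0.
Proof. dsimp. Qed.
Lemma dv_ix0_iy1 : mderiv iy1 (vX ix0) = 0.
Proof. dsimp. Qed.
Lemma dv_ix1_ix0 : mderiv ix0 (vX ix1) = 0.
Proof. dsimp. Qed.
Lemma dv_ix1_ix1 : mderiv ix1 (vX ix1) = 1.
Proof. dsimp. Qed.
Lemma dv_ix1_iy0 : mderiv iy0 (vX ix1) = 0.
Proof. dsimp. Qed.
Lemma dv_ix1_iy1 : mderiv iy1 (vX ix1) = 0.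
Proof. dsimp. Qed.
Lemma dv_iy0_ix0 : mderiv ix0 (vX iy0) = 0.
Proof. dsimp. Qed.
Lemma dv_iy0_ix1 : mderiv ix1 (vX iy0) = 0.
Proof. dsimp. Qed.
Lemma dv_iy0_iy0 : mderiv iy0 (vX iy0) = 1.
Proof. dsimp. Qed.
Lemma dv_iy0_iy1 : mderiv iy1 (vX iy0) = 0.
Proof. dsimp. Qed.
Lemma dv_iy1_ix0 : mderiv ix0 (vX iy1) = 0.
Proof. dsimp. Qed.
Lemma dv_iy1_ix1 : mderiv ix1 (vX iy1) = 0.
Proof. dsimp. Qed.
Lemma dv_iy1_iy0 : mderiv iy0 (vX iy1) = 0.
Proof. dsimp. Qed.
Lemma dv_iy1_iy1 : mderiv iy1 (vX iy1) = 1.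
Proof. dsimp. Qed.

Ltac dvv := rewrite ?dv_ix0_ix0 ?dv_ix0_ix1 ?dv_ix0_iy0 ?dv_ix0_iy1 ?dv_ix1_ix0 ?dv_ix1_ix1 ?dv_ix1_iy0 ?dv_ix1_iy1 ?dv_iy0_ix0 ?dv_iy0_ix1 ?dv_iy0_iy0 ?dv_iy0_iy1 ?dv_iy1_ix0 ?dv_iy1_ix1 ?dv_iy1_iy0 ?dv_iy1_iy1.

Lemma Omega_br1 dx dy K : hom2 dx dy K ->
  Omega (bracket_xy * K) = (2 + dx + dy) * K + bracket_xy * Omega K.
Proof.
move=> [hx hy].
suff -> : Omega (bracket_xy * K) = 2 * K + Ex K + Ey K + bracket_xy * Omega K.
  by rewrite hx hy; ring.
rewrite /Omega /Ex /Ey !mderivM ?d_bracket_xy_iy1 ?d_bracket_xy_iy0 ?d_bracket_xy_ix0 ?d_bracket_xy_ix1.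
rewrite !mderivD ?mderivN !mderivM ?d_bracket_xy_iy1 ?d_bracket_xy_iy0 ?d_bracket_xy_ix0 ?d_bracket_xy_ix1 ?mderivN; dvv.
ring.
Qed.

Lemma OmegaD f g : Omega (f + g) = Omega f + Omega g.
Proof. rewrite /Omega !mderivD; ring. Qed.
Lemma OmegaB f g : Omega (f - g) = Omega f - Omega g.
Proof. rewrite /Omega !mderivB; ring. Qed.
Lemma Omega_cM c F : cst c -> Omega (c * F) = c * Omega F.
Proof. by move=> [h1 h2 h3 h4]; rewrite /Omega (dcM _ h4) (dcM _ h1) (dcM _ h3) (dcM _ h2) mulrBr. Qed.

Lemma cst_nat n : cst n%:R.
Proof. by split; rewrite mderivn. Qed.
Lemma cstD c d : cst c -> cst d -> cst (c + d).
Proof. by move=> [h1 h2 h3 h4] [g1 g2 g3 g4]; split; rewrite mderivD ?h1 ?h2 ?h3 ?h4 ?g1 ?g2 ?g3 ?g4 addr0. Qed.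
Lemma cstB c d : cst c -> cst d -> cst (c - d).
Proof. by move=> [h1 h2 h3 h4] [g1 g2 g3 g4]; split; rewrite mderivB ?h1 ?h2 ?h3 ?h4 ?g1 ?g2 ?g3 ?g4 subr0. Qed.
Lemma cstM c d : cst c -> cst d -> cst (c * d).
Proof. by move=> [h1 h2 h3 h4] [g1 g2 g3 g4]; split; rewrite mderivM ?h1 ?h2 ?h3 ?h4 ?g1 ?g2 ?g3 ?g4 mul0r mulr0 addr0. Qed.
Lemma cstX c n : cst c -> cst (c ^+ n).
Proof. move=> h; elim: n => [|n IH]; first exact: (cst_nat 1). by rewrite exprS; apply: cstM. Qed.

Lemma hom2_br : hom2 1 1 bracket_xy.
Proof. rewrite /hom2 /Ex /Ey d_bracket_xy_ix0 d_bracket_xy_ix1 d_bracket_xy_iy0 d_bracket_xy_iy1 /bracket_xy; split; ring. Qed.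

Lemma Omega_brn dx dy H n : cst dx -> cst dy -> hom2 dx dy H ->
  Omega (bracket_xy ^+ n * H) =
  (n%:R * (n%:R + 1 + dx + dy)) * (bracket_xy ^+ n.-1 * H) + bracket_xy ^+ n * Omega H.
Proof.
move=> cx cy hH; elim: n => [|n IH]; first by rewrite expr0 !mul1r; ring.
have hK : hom2 (n%:R + dx) (n%:R + dy) (bracket_xy ^+ n * H).
  by have := hom2M (hom2X n hom2_br) hH; rewrite !mulr1.
rewrite exprS -mulrA (Omega_br1 hK) IH /=.
case: n {IH hK} => [|n] /=; rewrite ?expr0 ?exprS; ring.
Qed.

Lemma diagM f g : diag (f * g) = diag f * diag g.
Proof. exact: rmorphM. Qed.
Lemma diagD f g : diag (f + g) = diag f + diag g.
Proof. exact: rmorphD. Qed.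
Lemma diagB f g : diag (f - g) = diag f - diag g.
Proof. exact: rmorphB. Qed.
Lemma diag_nat n : diag n%:R = n%:R.
Proof. exact: rmorph_nat. Qed.
Lemma diagX f n : diag (f ^+ n) = diag f ^+ n.
Proof. exact: rmorphXn. Qed.
Lemma diagV i : diag (vX i) = diag_img i.
Proof. by rewrite /diag /vX comp_mpolyXU -tnth_nth tnth_mktuple. Qed.

Lemma diag_br : diag bracket_xy = 0.
Proof.
rewrite /bracket_xy diagB !diagM !diagV /diag_img.
rewrite /ix0 /ix1 /iy0 /iy1 !ieqE //=; ring.
Qed.

Lemma iterOD k f g : iter k Omega (f + g) = iter k Omega f + iter k Omega g.
Proof. by elim: k => [|k IH] //=; rewrite IH OmegaD. Qed.
Lemma iterO_cM k c F : cst c -> iter k Omega (c * F) = c * iter k Omega F.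
Proof. by move=> h; elim: k => [|k IH] //=; rewrite IH Omega_cM. Qed.

Lemma hom2_iter (D : nat) G i : hom2 D%:R D%:R G ->
  hom2 (D%:R - i%:R) (D%:R - i%:R) (iter i Omega G).
Proof.
move=> hG; elim: i => [|i IH]; first by rewrite subr0.
rewrite iterS; have := hom2_Omega (cstB (cst_nat D) (cst_nat i)) (cstB (cst_nat D) (cst_nat i)) IH.
by congr hom2; ring.
Qed.

Lemma mainL (D : nat) G : hom2 D%:R D%:R G -> forall k n i, (i + k <= D + n)%N ->
  exists c : nat, ((k < n)%N -> c = 0%N) /\ ((n <= k)%N -> (0 < c)%N) /\
   diag (iter k Omega (bracket_xy ^+ n * iter i Omega G)) = c%:R * diag (iter (i + k - n) Omega G).
Proof.
move=> hG; elim=> [|k IH] n i hik.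
  case: n hik => [|n] hik.
    by exists 1%N; split=> //; split=> //; rewrite expr0 mul1r addn0 subn0 mul1r.
  exists 0%N; split=> //; split=> //.
  by rewrite /= diagM diagX diag_br expr0n /= !mul0r.
case: n hik => [|n] hik.
  exists 1%N; split=> //; split=> //.
  by rewrite expr0 mul1r subn0 mul1r addnC iterD.
have hik1 : (i + k <= D + n)%N by lia.
have hik2 : (i.+1 + k <= D + n.+1)%N by lia.
have [c1 [h1a [h1b h1c]]] := IH n i hik1.
have [c2 [h2a [h2b h2c]]] := IH n.+1 i.+1 hik2.
have hi := hom2_iter i hG.
have cD := cstB (cst_nat D) (cst_nat i).
rewrite iterSr (Omega_brn _ cD cD hi) iterOD /=.
have c1' : cst 1 by have := cst_nat 1.
rewrite iterO_cM; last by apply: cstM; [exact: cst_nat | do 3 apply: cstD => //; exact: cst_nat].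
rewrite -[Omega (iter i Omega G)]/(iter i.+1 Omega G) diagD diagM h2c h1c addSn subSS addnS subSS.
case: (leqP n k) => hnk.
  have hiD : (i <= D)%N by lia.
  exists (n.+1 * (n.+2 + (D - i) + (D - i)) * c1 + c2)%N; split; first by move=> h; exfalso; lia.
  split.
    move=> _; have := h1b hnk; nia.
  have ea : (n.+1%:R * (n.+1%:R + 1 + (D%:R - i%:R) + (D%:R - i%:R)) : P8) =
     (n.+1 * (n.+2 + (D - i) + (D - i)))%:R.
    rewrite natrM !natrD natrB //; rewrite -[n.+2]addn1 -[n.+1]addn1 !natrD; ring.
  rewrite ea diag_nat natrD natrM; ring.
exists 0%N; split=> //; split; first by move=> h; exfalso; lia.
rewrite (h1a hnk) (h2a (ltnW hnk)).
ring.
Qed.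

Definition Q s t u v : P8 := a_x ^+ s * a_y ^+ t * b_x ^+ u * b_y ^+ v.
Definition ab : P8 := vX ia0 * vX ib1 - vX ia1 * vX ib0.

Lemma cst_v0 : cst (vX ia0). Proof. by split; rewrite ?d_ia0_ix0 ?d_ia0_ix1 ?d_ia0_iy0 ?d_ia0_iy1. Qed.
Lemma cst_v1 : cst (vX ia1). Proof. by split; rewrite ?d_ia1_ix0 ?d_ia1_ix1 ?d_ia1_iy0 ?d_ia1_iy1. Qed.
Lemma cst_w0 : cst (vX ib0). Proof. by split; rewrite ?d_ib0_ix0 ?d_ib0_ix1 ?d_ib0_iy0 ?d_ib0_iy1. Qed.
Lemma cst_w1 : cst (vX ib1). Proof. by split; rewrite ?d_ib1_ix0 ?d_ib1_ix1 ?d_ib1_iy0 ?d_ib1_iy1. Qed.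
Lemma cst_ab : cst ab.
Proof. by apply: cstB; apply: cstM; rewrite ?cst_v0 ?cst_v1 ?cst_w0 ?cst_w1 //; [exact: cst_v0|exact: cst_w1|exact: cst_v1|exact: cst_w0]. Qed.

Ltac dall := do 4 rewrite ?mderivD ?mderivB ?mderivN ?mderivM ?dpow ?mderivn ?mderiv0 ?d_a_x_ix0 ?d_a_x_ix1 ?d_a_x_iy0 ?d_a_x_iy1 ?d_a_y_ix0 ?d_a_y_ix1 ?d_a_y_iy0 ?d_a_y_iy1 ?d_b_x_ix0 ?d_b_x_ix1 ?d_b_x_iy0 ?d_b_x_iy1 ?d_b_y_ix0 ?d_b_y_ix1 ?d_b_y_iy0 ?d_b_y_iy1 ?d_ia0_ix0 ?d_ia0_ix1 ?d_ia0_iy0 ?d_ia0_iy1 ?d_ia1_ix0 ?d_ia1_ix1 ?d_ia1_iy0 ?d_ia1_iy1 ?d_ib0_ix0 ?d_ib0_ix1 ?d_ib0_iy0 ?d_ib0_iy1 ?d_ib1_ix0 ?d_ib1_ix1 ?d_ib1_iy0 ?d_ib1_iy1 ?mulr0 ?mul0r ?addr0 ?add0r.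

Lemma OmegaQ s t u v : Omega (Q s t u v) =
  ab * ((s * v)%:R * Q s.-1 t u v.-1 - (u * t)%:R * Q s t.-1 u.-1 v).
Proof.
rewrite /Omega /Q /ab; dall.
rewrite !natrM.
ring.
Qed.

Lemma iterO0 k : iter k Omega 0 = 0.
Proof. elim: k => [|k IH] //=; rewrite IH /Omega !mderiv0 subr0 //. Qed.
Lemma iterOB k f g : iter k Omega (f - g) = iter k Omega f - iter k Omega g.
Proof. by elim: k => [|k IH] //=; rewrite IH OmegaB. Qed.

Lemma QL N : forall s t u v, (u + v = N)%N -> (v <= s)%N -> (u <= t)%N ->
  exists kap : nat, (0 < kap)%N /\
    iter N Omega (Q s t u v) = ((-1) ^+ u * kap%:R) * ab ^+ N * Q (s - v) (t - u) 0 0.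
Proof.
elim: N => [|N IH] s t u v huv hvs hut.
  have u0 : u = 0%N by lia.
  have v0 : v = 0%N by lia.
  subst; exists 1%N; split=> //=; rewrite !subn0 expr0 !mul1r //.
rewrite iterSr OmegaQ (iterO_cM _ _ cst_ab) iterOB (iterO_cM _ _ (cst_nat _)) (iterO_cM _ _ (cst_nat _)).
have [k1 [hk1 e1]] : exists k1 : nat, ((0 < v)%N -> (0 < k1)%N) /\
    (s * v)%:R * iter N Omega (Q s.-1 t u v.-1) = ((-1) ^+ u * k1%:R) * ab ^+ N * Q (s - v) (t - u) 0 0.
  case: v huv hvs => [|v] huv hvs.
    by exists 0%N; split=> //; rewrite muln0; ring.
  have q1 : (u + v = N)%N by lia.
  have q2 : (v <= s.-1)%N by lia.
  have [k [hk ek]] := IH s.-1 t u v q1 q2 hut.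
  exists (s * v.+1 * k)%N; split; first by move=> _; nia.
  rewrite ek /= (_ : (s.-1 - v = s - v.+1)%N); last by lia.
  rewrite !natrM; ring.
have [k2 [hk2 e2]] : exists k2 : nat, ((0 < u)%N -> (0 < k2)%N) /\
    (u * t)%:R * iter N Omega (Q s t.-1 u.-1 v) = - (((-1) ^+ u * k2%:R) * ab ^+ N * Q (s - v) (t - u) 0 0).
  case: u huv hut e1 => [|u] huv hut e1.
    by exists 0%N; split=> //; rewrite mul0n; ring.
  have q1 : (u + v = N)%N by lia.
  have q2 : (u <= t.-1)%N by lia.
  have [k [hk ek]] := IH s t.-1 u v q1 hvs q2.
  exists (u.+1 * t * k)%N; split; first by move=> _; nia.
  rewrite ek /= (_ : (t.-1 - u = t - u.+1)%N); last by lia.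
  rewrite !natrM exprS; ring.
exists (k1 + k2)%N; split.
  by case: (posnP v) => [v0|/hk1]; [have : (0 < u)%N by lia; move/hk2 | ]; lia.
rewrite e1 e2 natrD exprS; ring.
Qed.

Definition w0 : 'I_8 -> rat := fun i => (i : nat)%:R.
Lemma nz_of_eval (p : P8) : meval w0 p != 0 -> p != 0.
Proof. by apply: contra => /eqP ->; rewrite meval0. Qed.
Lemma evV i : meval w0 (vX i) = (i : nat)%:R.
Proof. by rewrite /vX mevalXU. Qed.

Lemma nat_nz n : (0 < n)%N -> (n%:R : P8) != 0.
Proof. move=> hn; apply: nz_of_eval; rewrite rmorph_nat pnatr_eq0 -lt0n //. Qed.

Lemma ax_nz : a_x != 0.
Proof. apply: nz_of_eval; rewrite /a_x mevalD !mevalM !evV /ia0 /ix0 /ia1 /ix1 !inordK //. Qed.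
Lemma bx_nz : b_x != 0.
Proof. apply: nz_of_eval; rewrite /b_x mevalD !mevalM !evV /ib0 /ix0 /ib1 /ix1 !inordK //. Qed.
Lemma ab_nz : ab != 0.
Proof. apply: nz_of_eval; rewrite /ab mevalB !mevalM !evV /ia0 /ib1 /ia1 /ib0 !inordK //. Qed.

Ltac dimg := rewrite /diag_img /ix0 /ix1 /iy0 /iy1 /ia0 /ia1 /ib0 /ib1 ?ieqE //=.
Lemma diag_ax : diag a_x = a_x.
Proof. rewrite /a_x diagD !diagM !diagV; dimg. Qed.
Lemma diag_ay : diag a_y = a_x.
Proof. rewrite /a_y /a_x diagD !diagM !diagV; dimg. Qed.
Lemma diag_bx : diag b_x = b_x.
Proof. rewrite /b_x diagD !diagM !diagV; dimg. Qed.
Lemma diag_by : diag b_y = b_x.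
Proof. rewrite /b_y /b_x diagD !diagM !diagV; dimg. Qed.
Lemma diag_ab : diag ab = ab.
Proof. rewrite /ab diagB !diagM !diagV; dimg. Qed.

Lemma diagQ_nz s t u v : diag (Q s t u v) != 0.
Proof.
rewrite /Q !diagM !diagX diag_ax diag_ay diag_bx diag_by.
by rewrite !mulf_neq0 // expf_neq0 // ?ax_nz ?bx_nz.
Qed.

Lemma hom2_ax : hom2 1 0 a_x.
Proof. rewrite /hom2 /Ex /Ey d_a_x_ix0 d_a_x_ix1 d_a_x_iy0 d_a_x_iy1 /a_x; split; ring. Qed.
Lemma hom2_ay : hom2 0 1 a_y.
Proof. rewrite /hom2 /Ex /Ey d_a_y_ix0 d_a_y_ix1 d_a_y_iy0 d_a_y_iy1 /a_y; split; ring. Qed.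
Lemma hom2_bx : hom2 1 0 b_x.
Proof. rewrite /hom2 /Ex /Ey d_b_x_ix0 d_b_x_ix1 d_b_x_iy0 d_b_x_iy1 /b_x; split; ring. Qed.
Lemma hom2_by : hom2 0 1 b_y.
Proof. rewrite /hom2 /Ex /Ey d_b_y_ix0 d_b_y_ix1 d_b_y_iy0 d_b_y_iy1 /b_y; split; ring. Qed.

Lemma hom2_Q M e : hom2 (M + e)%:R (M + e)%:R (Q M M e e).
Proof.
have := hom2M (hom2M (hom2M (hom2X M hom2_ax) (hom2X M hom2_ay)) (hom2X e hom2_bx)) (hom2X e hom2_by).
by rewrite /Q natrD; congr hom2; ring.
Qed.

Theorem mainTheorem9 (r e p' : nat) :
  (2 <= r)%N -> (1 <= e)%N -> (2 * p' <= (r + 1) * e)%N ->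
  exists p : nat, (2 * p <= r * e)%N /\
    diag (iter (2 * p') Omega
      (bracket_xy ^+ (2 * p) * a_x ^+ (r * e - 2 * p) * a_y ^+ (r * e - 2 * p)
       * b_x ^+ e * b_y ^+ e)) != 0.
Proof.
move=> hr he hp.
case: (leqP (2 * p') (r * e)) => h.
  exists p'; split=> //.
  set M := (r * e - 2 * p')%N.
  have -> : bracket_xy ^+ (2 * p') * a_x ^+ M * a_y ^+ M * b_x ^+ e * b_y ^+ e =
            bracket_xy ^+ (2 * p') * iter 0 Omega (Q M M e e) by rewrite /Q /= !mulrA.
  have hc0 : (0 + 2 * p' <= M + e + 2 * p')%N by lia.
  have [c [_ [hc ->]]] := mainL (hom2_Q M e) hc0.
  rewrite add0n subnn /=.
  by rewrite mulf_neq0 // ?nat_nz ?hc // diagQ_nz.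
exists (p' - e)%N; split; first by lia.
set M := (r * e - 2 * (p' - e))%N.
have -> : bracket_xy ^+ (2 * (p' - e)) * a_x ^+ M * a_y ^+ M * b_x ^+ e * b_y ^+ e =
          bracket_xy ^+ (2 * (p' - e)) * iter 0 Omega (Q M M e e) by rewrite /Q /= !mulrA.
have hc0 : (0 + 2 * p' <= M + e + 2 * (p' - e))%N by lia.
have [c [_ [hc ->]]] := mainL (hom2_Q M e) hc0.
have hre : (2 * e <= r * e)%N by nia.
have -> : (0 + 2 * p' - 2 * (p' - e) = e + e)%N by lia.
have heM : (e <= M)%N by lia.
have [kap [hk ->]] := QL (erefl (e + e)%N) heM heM.
have dN1 : diag (-1) = -1 by exact: rmorphN1.
rewrite !diagM !diagX diag_ab dN1 diag_nat.
rewrite !mulf_neq0 ?nat_nz ?hc ?diagQ_nz ?expf_neq0 ?ab_nz ?oppr_eq0 ?oner_neq0 ?diag_ax ?diag_ay ?diag_bx ?diag_by ?ax_nz ?bx_nz //; lia.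
Qed.
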